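(* For every $n\ge 3$ and all elements $c_1,\dots,c_{n-1}$ of a commutative $\mathbb{Q}$-algebra, \[S_0(n)(c_1,\dots,c_{n-1})=\sum_{\substack{i_1+i_2=n-1\\ i_1,i_2\ge1}}c_{i_1}c_{i_2}.\]
   Context: Let $a_0,a_1,\dots$ be indeterminates and $a(x)=\sum_{i\ge0}a_ix^i$. For a positive integer $j$ set $G(x)=\prod_{i=0}^{j-1}\frac{1+a(x)x^2}{1+ix}$, $H(x)=\prod_{i=1-j}^{-1}\frac{1+ix}{1+a(x)x^2}$, $u=2j-1$, $v=j(j-1)$. For each $n\ge1$ there are unique polynomials $S_0(n),\dots,S_n(n)\in\mathbb{Q}[a_0,\dots,a_{n-2}]$, independent of $j$, such that for every positive integer $j$ the coefficient of $x^{n-1}$ in $\frac{G(x)-H(x)}{x^2}(1+a(x)x^2)$ equals $u\big(a_{n-1}+S_0(n)+\sum_{i=1}^nS_i(n)v^i\big)$. $S_i(n)(c_1,\dots,c_{n-1})$ denotes the result of substituting $a_k=c_{k+1}$ for $0\le k\le n-2$. *)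

(* Defs.v *)
From HB Require Import structures.
From mathcomp Require Import all_boot all_order all_algebra.
From mathcomp Require Import mpoly.
Set Implicit Arguments. Unset Strict Implicit. Unset Printing Implicit Defensive.
Import Order.TTheory GRing.Theory Num.Theory.
Local Open Scope ring_scope.

Notation Qa n := {mpoly rat[n]}.

Definition avar (n k : nat) : Qa n :=
  if insub k is Some i then 'X_i else 0.

(* Truncation of the power series a(x) = sum_i a_i x^i to degree < n.
   Only a_0,...,a_(n-1) can influence the coefficient of x^(n-1) considered
   below, so this truncation is harmless. *)
Definition apoly (n : nat) : {poly Qa n} :=
  \sum_(k < n) (avar n k)%:P * 'X^k.

(* Inverse modulo x^N of a (polynomial) power series p with p(0) = 1:
   tinv N p = sum_(k<N) (1-p)^k, so that p * tinv N p = 1 - (1-p)^N = 1 mod x^N.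
   All coefficients of x^m, m < N, of products of such truncations agree with
   those of the corresponding formal power series. *)
Definition tinv (R : comRingType) (N : nat) (p : {poly R}) : {poly R} :=
  \sum_(k < N) (1 - p) ^+ k.

(* Precision used: coefficients up to x^(n+1) of G and H are needed. *)
Definition prec (n : nat) : nat := n.+2.

(* G(x) = prod_(i=0)^(j-1) (1 + a(x) x^2) / (1 + i x)   (mod x^(n+2)) *)
Definition Gser (n j : nat) : {poly Qa n} :=
  \prod_(i < j) ((1 + apoly n * 'X^2) * tinv (prec n) (1 + i%:R *: 'X)).

(* H(x) = prod_(i=1-j)^(-1) (1 + i x) / (1 + a(x) x^2)   (mod x^(n+2)) *)
Definition Hser (n j : nat) : {poly Qa n} :=
  \prod_(i <- [seq (k%:Z - j%:Z)%R | k <- iota 1 j.-1])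
     ((1 + (i%:~R : Qa n) *: 'X) * tinv (prec n) (1 + apoly n * 'X^2)).

(* The coefficient of x^(n-1) in ((G(x) - H(x)) / x^2) * (1 + a(x) x^2);
   division by x^2 is drop_poly 2 (G - H has no terms of degree < 2). *)
Definition lhs_coef (n j : nat) : Qa n :=
  (drop_poly 2 (Gser n j - Hser n j) * (1 + apoly n * 'X^2))`_(n.-1).

Definition emb (n : nat) (p : Qa n.-1) : Qa n :=
  mmap (@mpolyC n rat) (fun i : 'I_n.-1 => avar n i) p.

Definition S_spec (n : nat) (S : nat -> Qa n.-1) : Prop :=
  forall j : nat, (0 < j)%N ->
    lhs_coef n j =
      (2 * j - 1)%N%:R *
        (avar n n.-1 + emb (S 0%N)
         + \sum_(1 <= i < n.+1) emb (S i) * ((j * (j - 1))%N%:R) ^+ i).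

Definition Seval (n : nat) (A : comAlgType rat) (p : Qa n.-1) (c : nat -> A) : A :=
  mmap (in_alg A) (fun i : 'I_n.-1 => c (i : nat).+1) p.

Arguments S_spec n S : clear implicits.
Arguments Seval n {A} p c.
Arguments emb n p : clear implicits.

(* Main.v *)
Require Import Defs.
From HB Require Import structures.
From mathcomp Require Import all_boot all_order all_algebra.
From mathcomp Require Import mpoly.
From mathcomp Require Import zify.
Import Order.TTheory GRing.Theory Num.Theory.
Local Open Scope ring_scope.

Lemma ev_emb n (p : {mpoly rat[n.-1]}) (A : comAlgType rat) (c : nat -> A) :
  mmap (in_alg A) (fun i : 'I_n => c (i : nat).+1) (emb n p) = Seval n p c.
Proof.
rewrite /emb /Seval.
rewrite [X in mmap _ _ X]/mmap.
rewrite rmorph_sum /=; apply: eq_bigr => m _.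
rewrite rmorphM /= mmapC /mmap1 rmorph_prod /=; congr (_ * _).
apply: eq_bigr => i _; rewrite rmorphXn /=; congr (_ ^+ _).
rewrite /avar; case: insubP => [i' _ Hv|]; last first.
  by case: (n) i => [|k] [] //= x Hx; rewrite ltnS ltnW.
by rewrite mmapX mmap1U Hv.
Qed.

Lemma coef_apoly n k : (k < n)%N -> (apoly n)`_k = avar n k.
Proof.
move=> Hk; rewrite /apoly coef_sum (bigD1 (Ordinal Hk)) //= big1 ?addr0.
  by rewrite coefCM coefXn eqxx mulr1.
by move=> i Hi; rewrite coefCM coefXn; case: eqP => [e|]; [case/eqP: Hi; apply/val_inj|]; rewrite ?mulr0.
Qed.

Lemma lhs1 n : (2 < n)%N -> lhs_coef n 1 =
  avar n n.-1 + \sum_(i < n.-2) avar n i * avar n (n - 3 - i)%N.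
Proof.
move=> Hn.
have HG : Gser n 1 = 1 + apoly n * 'X^2.
  rewrite /Gser big_ord1 /tinv /= scale0r addr0 subrr big_ord_recl expr0 big1 ?addr0 ?mulr1 //.
  by move=> k _; rewrite exprS mul0r.
have HH : Hser n 1 = 1 by rewrite /Hser /= big_nil.
rewrite /lhs_coef HG HH addrC addKr drop_polyMXn_id mulrDr mulr1 coefD mulrA coefMXn.
clear HG HH.
have -> : (n.-1 < 2)%N = false by case: n Hn => [|[|[|k]]].
rewrite coef_apoly; last by case: n Hn.
congr (_ + _); rewrite coefM.
have -> : (n.-1 - 2).+1 = n.-2 by case: n Hn => [|[|[|k]]] //= _; rewrite subn2.
apply: eq_bigr => i _; rewrite !coef_apoly //.
- by have -> : (n.-1 - 2 = n - 3)%N by rewrite -subn1 -subnDA.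
- apply: (leq_ltn_trans (leq_subr _ _)); apply: (leq_ltn_trans (leq_subr _ _)).
  by case: n Hn {i}.
- by apply: (leq_trans (ltn_ord i)); case: n Hn {i} => [|[|k]] //= _; rewrite ltnW // ltnW.
Qed.

Lemma ev_avar n (A : comAlgType rat) (c : nat -> A) k : (k < n)%N ->
  mmap (in_alg A) (fun i : 'I_n => c (i : nat).+1) (avar n k) = c k.+1.
Proof.
move=> Hk; rewrite /avar insubT /= mmapX mmap1U //.
Qed.

Theorem proposition4p2 (n : nat) (hn : (3 <= n)%N) (S : nat -> {mpoly rat[n.-1]})
    (hS : S_spec n S) (A : comAlgType rat) (c : nat -> A) :
  Seval n (S 0%N) c = \sum_(1 <= i1 < n.-1) c i1 * c (n.-1 - i1)%N.
Proof.
have := hS 1%N isT; rewrite lhs1 //.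
set T := (\sum_(1 <= i < n.+1) _)%R.
have -> : T = 0.
  rewrite /T big_nat big1 // => i /andP[Hi _].
  by rewrite /= expr0n; case: i Hi => // i _; rewrite mulr0.
rewrite addr0 /= mul1r => /addrI H.
rewrite -ev_emb -H rmorph_sum /= big_add1 big_mkord.
apply: eq_bigr => i _; rewrite rmorphM /= !ev_avar //.
- congr (_ * _); congr (c _).
  case: i => i Hi /=; move: Hi hn; clear; move=> Hi hn.
  have : (i < n - 2)%N by rewrite -subn2 in Hi.
  lia.
- case: i => i Hi /=; move: Hi hn; clear; move=> Hi hn.
  have : (i < n - 2)%N by rewrite -subn2 in Hi.
  lia.
- case: i => i Hi /=; move: Hi hn; clear; move=> Hi hn.
  have : (i < n - 2)%N by rewrite -subn2 in Hi.
  lia.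
Qed.
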